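(* For any real number field $K$ and any $a,b\in K$ with $a>0$ and $b\neq 0$, there exist $x,y,z,u,v,w\in K$ satisfying $$x^2 - ay^2 + au^2 - bv^2 + abw^2 = 0,\qquad z^2 - 4 = au^2,\qquad \mathbb{Q}\left(\tfrac{y}{u}\right) = \mathbb{Q}\left(\tfrac{y^2}{u^2}\right) = K,$$ and $$u\neq 0,\quad x + \frac{yz}{2u} > 2,\quad \frac{y}{u}>1,\quad z>2,\quad abw^2 - bv^2 > 4.$$
   Context: A real number field is a field $K\subset\mathbb{R}$ with $[K:\mathbb{Q}]<\infty$. *)

(* Defs.v *)
From HB Require Import structures.
From mathcomp Require Import all_boot all_order all_algebra.
From mathcomp Require Import classical_sets reals.
Set Implicit Arguments. Unset Strict Implicit. Unset Printing Implicit Defensive.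
Import Order.TTheory GRing.Theory Num.Theory.
Local Open Scope ring_scope.

Definition is_subfield (R : realType) (F : set R) : Prop :=
  [/\ F 1,
      (forall x y, F x -> F y -> F (x - y)),
      (forall x y, F x -> F y -> F (x * y)) &
      (forall x, F x -> x != 0 -> F x^-1)].

Definition finite_over_Q (R : realType) (F : set R) : Prop :=
  exists (n : nat) (e : 'I_n -> R),
    (forall i, F (e i)) /\
    (forall x, F x -> exists c : 'I_n -> rat, x = \sum_(i < n) ratr (c i) * e i).

Definition real_number_field (R : realType) (K : set R) : Prop :=
  is_subfield K /\ finite_over_Q K.

Definition Qadj (R : realType) (t : R) : set R :=
  fun x => forall F : set R, is_subfield F -> F t -> F x.

(* Main.v *)
Require Import Defs.
From HB Require Import structures.
From mathcomp Require Import all_boot all_order all_algebra all_field.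
From mathcomp Require Import classical_sets reals.
From mathcomp Require Import ring lra zify.
Import Order.TTheory GRing.Theory Num.Theory.
Local Open Scope ring_scope.
Set Implicit Arguments. Unset Strict Implicit.

Section SF.
Variable R : realType.
Variable F : set R.
Hypothesis HF : is_subfield F.

Lemma sf1 : F 1. Proof. by case: HF. Qed.
Lemma sfB x y : F x -> F y -> F (x - y). Proof. by case: HF => _ h _ _; apply: h. Qed.
Lemma sfM x y : F x -> F y -> F (x * y). Proof. by case: HF => _ _ h _; apply: h. Qed.
Lemma sf0 : F 0. Proof. by rewrite -(subrr 1); apply: sfB; apply: sf1. Qed.
Lemma sfN x : F x -> F (- x). Proof. by move=> h; rewrite -sub0r; apply: sfB => //; apply: sf0. Qed.
Lemma sfD x y : F x -> F y -> F (x + y).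
Proof. by move=> hx hy; rewrite -(opprK y); apply: sfB => //; apply: sfN. Qed.
Lemma sfV x : F x -> F x^-1.
Proof.
case: HF => _ _ _ h hx; have [->|nz] := eqVneq x 0; first by rewrite invr0; apply: sf0.
exact: h.
Qed.
Lemma sfdiv x y : F x -> F y -> F (x / y). Proof. by move=> hx hy; apply: sfM => //; apply: sfV. Qed.
Lemma sfX x n : F x -> F (x ^+ n).
Proof. move=> hx; elim: n => [|n IH]; first by rewrite expr0; apply: sf1. by rewrite exprS; apply: sfM. Qed.
Lemma sfn n : F n%:R.
Proof. elim: n => [|n IH]; first exact: sf0. by rewrite -addn1 natrD; apply: sfD => //; apply: sf1. Qed.
Lemma sfz (z : int) : F z%:~R.
Proof. case: z => n; first exact: sfn. by rewrite NegzE mulrNz; apply: sfN; apply: sfn. Qed.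
Lemma sfq (q : rat) : F (ratr q).
Proof.
rewrite -(divq_num_den q) fmorph_div /= !ratr_int; apply: sfdiv; apply: sfz.
Qed.
Lemma sfsum I (r : seq I) (P : pred I) (f : I -> R) :
  (forall i, P i -> F (f i)) -> F (\sum_(i <- r | P i) f i).
Proof. move=> h; apply: (big_ind F) => //; [exact: sf0| exact: sfD]. Qed.
Lemma sfhorner (p : {poly rat}) x : F x -> F (map_poly ratr p).[x].
Proof.
move=> hx; rewrite horner_coef; apply: sfsum => i _.
by rewrite coef_map /=; apply: sfM; [apply: sfq | apply: sfX].
Qed.
End SF.

Section Qadj.
Variable R : realType.

Lemma Qadj_sf (t : R) : is_subfield (Qadj t).
Proof.
split.
- by move=> F HF _; apply: sf1.
- by move=> x y hx hy F HF Ft; apply: sfB => //; [apply: hx | apply: hy].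
- by move=> x y hx hy F HF Ft; apply: sfM => //; [apply: hx | apply: hy].
- by move=> x hx _ F HF Ft; apply: sfV => //; apply: hx.
Qed.
Lemma Qadj_self (t : R) : Qadj t t. Proof. by move=> F _ . Qed.
Lemma Qadj_min (F : set R) (t : R) : is_subfield F -> F t -> forall w, Qadj t w -> F w.
Proof. by move=> HF Ft w h; apply: h. Qed.
Lemma Qadj_trans (t s w : R) : Qadj t s -> Qadj s w -> Qadj t w.
Proof. by move=> hs hw; apply: (Qadj_min (Qadj_sf t) hs). Qed.
End Qadj.
Lemma alg_span (R : realType) n (e : 'I_n -> R) (w : R)
  (hsp : forall j : 'I_n.+1, exists c : 'I_n -> rat, w ^+ j = \sum_(i < n) ratr (c i) * e i) :
  exists p : {poly rat}, p != 0 /\ root (map_poly ratr p) w.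
Proof.
have [cc hcc] := boolp.choice hsp.
pose A : 'M[rat]_(n.+1, n) := \matrix_(j, i) cc j i.
pose K0 := kermx A.
have nzK : K0 != 0.
  rewrite -mxrank_eq0 mxrank_ker; have := rank_leq_col A; lia.
have [i Hi] : exists i, row i K0 != 0.
  case: (pickP (fun i => row i K0 != 0)) => [i Hi | H]; first by exists i.
  case/eqP: nzK; apply/matrixP => k j; have := H k; move/negbFE => /eqP /rowP /(_ j).
  by rewrite !mxE.
pose v := row i K0.
have vA : v *m A = 0 by rewrite /v -row_mul mulmx_ker row0.
exists (\poly_(j < n.+1) v 0 (inord j)); split.
  apply: contra Hi => /eqP h; apply/eqP/rowP => j.
  by have := congr1 (fun q : {poly rat} => q`_j) h; rewrite coef_poly ltn_ord coef0 inord_val !mxE.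
rewrite /root (horner_coef_wide (n := n.+1)); last first.
  by rewrite size_map_poly; apply: size_poly.
under eq_bigr => j _ do rewrite coef_map coef_poly ltn_ord /= inord_val hcc big_distrr /=.
rewrite exchange_big /= big1 // => k _.
transitivity (ratr ((v *m A) 0 k) * e k); last by rewrite vA mxE rmorph0 mul0r.
rewrite !mxE rmorph_sum mulr_suml; apply: eq_bigr => j _.
by rewrite !mxE rmorphM mulrA.
Qed.
Lemma sep_root (R : realType) (y : R) (q : {poly rat}) :
  q != 0 -> root (map_poly ratr q) y ->
  exists q1 : {poly rat}, root (map_poly ratr q1) y /\ separable_poly q1.
Proof.
move=> nz_q qy_0.
have pcharF0 : forall n : nat, (n%:R == 0 :> rat) = (n == 0%N).
  by move=> n; rewrite pnatr_eq0.
pose iota := (@ratr R).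
exists (q %/ gcdp q q^`()); split; last exact: make_separable.
have /dvdpP[q1 Dq] := dvdp_gcdl q q^`().
rewrite {1}Dq mulpK ?gcdp_eq0; last by apply/nandP; left.
have [n [r nz_ry Dr]] := multiplicity_XsubC (map_poly iota q) y.
rewrite map_poly_eq0 nz_q /= in nz_ry.
case: n => [|n] in Dr; first by rewrite Dr mulr1 (negPf nz_ry) in qy_0.
have: ('X - y%:P) ^+ n.+1 %| map_poly iota q by rewrite Dr dvdp_mulIr.
rewrite Dq rmorphM /= gcdp_map -(eqp_dvdr _ (gcdp_mul2l _ _ _)) -deriv_map Dr.
rewrite dvdp_gcd derivM deriv_exp derivXsubC mul1r !mulrA dvdp_mulIr /=.
rewrite mulrDr mulrA dvdp_addr ?dvdp_mulIr // exprS -scaler_nat -!scalerAr.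
rewrite dvdpZr -?(rmorph_nat iota) ?fmorph_eq0 ?pcharF0 //.
rewrite mulrA dvdp_mul2r ?expf_neq0 ?polyXsubC_eq0 //.
by rewrite Gauss_dvdpl ?dvdp_XsubCl // coprimep_sym coprimep_XsubC.
Qed.

Lemma PETQ (R : realType) (x y : R) (px py : {poly rat}) :
  px != 0 -> root (map_poly ratr px) x -> py != 0 -> root (map_poly ratr py) y ->
  exists2 r : {poly R}, r != 0 & forall t : rat, ~~ root r (ratr t) ->
    Qadj (ratr t * y - x) x /\ Qadj (ratr t * y - x) y.
Proof.
move=> nzp px0 nzq qy0.
have [q1 [q1y sq1]] := sep_root nzq qy0.
have [r nzr H] := large_field_PET nzp px0 q1y sq1.
exists r => // t /H [[qa ea] [qb eb]]; split.
  by have := sfhorner (Qadj_sf (ratr t * y - x)) qa (@Qadj_self R (ratr t * y - x)); rewrite ea.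
by have := sfhorner (Qadj_sf (ratr t * y - x)) qb (@Qadj_self R (ratr t * y - x)); rewrite eb.
Qed.

Lemma avoid (R : realType) (r : {poly R}) (q : nat -> rat) N0 :
  r != 0 -> injective q -> exists n, (N0 <= n)%N /\ ~~ root r (ratr (q n)).
Proof.
move=> nzr iq.
pose rs := [seq ratr (q (N0 + i)) : R | i <- iota 0 (size r)].
have : ~~ all (root r) rs.
  apply/negP => hall.
  suff : uniq rs by move/(max_poly_roots nzr hall); rewrite size_map size_iota ltnn.
  rewrite map_inj_uniq ?iota_uniq // => i j /fmorph_inj /iq; lia.
case/allPn => z /mapP [i _ ->] nroot; exists (N0 + i)%N; split => //; lia.
Qed.

Lemma natq_inj : injective (fun m : nat => (m%:R : rat)).
Proof. by move=> a b /eqP; rewrite eqr_nat => /eqP. Qed.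

Lemma alg_rnf (R : realType) (K : set R) : real_number_field K ->
  forall w, K w -> exists p : {poly rat}, p != 0 /\ root (map_poly ratr p) w.
Proof.
case=> HK [n [e [he hsp]]] w hw.
by apply: (alg_span (e := e)) => j; apply: hsp; apply: sfX.
Qed.

Lemma prim (R : realType) (K : set R) : real_number_field K ->
  exists th, K th /\ forall w, K w -> Qadj th w.
Proof.
move=> HR; have algK := alg_rnf HR.
case: HR => HK [n [e [he hsp]]].
have step : forall k, (k <= n)%N -> exists th, K th /\
    forall i : 'I_n, (i < k)%N -> Qadj th (e i).
  elim => [_ | k IH hk]; first by exists 0; split => //; apply: sf0.
  have [th [Kth Hth]] := IH (ltnW hk).
  have [px [nzp px0]] := algK th Kth.
  have [py [nzq qy0]] := algK _ (he (Ordinal hk)).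
  have [r nzr H] := PETQ nzp px0 nzq qy0.
  have [m [_ nr]] := avoid 0 nzr natq_inj.
  have [H1 H2] := H _ nr.
  exists (ratr (m%:R : rat) * e (Ordinal hk) - th); split.
    by apply: sfB => //; apply: sfM => //; apply: sfq.
  move=> i; rewrite ltnS leq_eqVlt => /orP [/eqP ei | lt].
    by have -> : i = Ordinal hk by apply: val_inj.
  exact: Qadj_trans H1 (Hth i lt).
have [th [Kth Hth]] := step n (leqnn n).
exists th; split => // w /hsp [c ->].
apply: (sfsum (Qadj_sf th)) => i _; apply: (sfM (Qadj_sf th)).
  exact: (sfq (Qadj_sf th)).
exact: Hth.
Qed.

Lemma choose_lambda (R : realType) (a M : R) : 0 < a ->
  exists l : rat, 1 < a * (ratr l)^+2 /\ M < 4 * ratr l / (a * (ratr l)^+2 - 1).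
Proof.
move=> a0.
pose s0 := Num.sqrt (a^-1).
have s0p : 0 < s0 by rewrite sqrtr_gt0 invr_gt0.
have as0 : a * s0 ^+ 2 = 1 by rewrite sqr_sqrtr ?invr_ge0 ?ltW // mulfV ?gt_eqF.
pose B := M * a * (2 * s0 + 1) / (4 * s0).
pose N := (Num.Def.archi_bound `|B|).+1.
have NB : B < N%:R.
  have := archi_boundP (normr_ge0 B); rewrite /N -addn1 natrD.
  have := ler_norm B; lra.
have N1 : 1 <= (N%:R : R) by rewrite ler1n.
pose f := Num.floor (N%:R * s0).
exists ((f + 1)%:~R / N%:R).
rewrite fmorph_div /= ratr_int ratr_nat.
set L := _ / _.
have [fl1 fl2] := andP (floor_itv (N%:R * s0)).
rewrite -/f in fl1 fl2.
pose e := (N%:R : R)^-1.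
have e0 : 0 < e by rewrite invr_gt0; lra.
have e1 : e <= 1 by rewrite invf_le1; lra.
have Ne : N%:R * e = 1 by rewrite mulfV // gt_eqF //; lra.
have hL : L = (f + 1)%:~R * e by [].
have hL1 : s0 < L.
  rewrite hL; have : N%:R * s0 * e < (f + 1)%:~R * e by rewrite ltr_pM2r.
  by rewrite mulrAC Ne mul1r.
have hL2 : L <= s0 + e.
  rewrite hL; have : (f + 1)%:~R * e <= (N%:R * s0 + 1) * e.
    by rewrite ler_pM2r // intrD; lra.
  by rewrite mulrDl mulrAC Ne mul1r mul1r.
have hD : 1 < a * L ^+ 2 by nra.
split => //.
have hD2 : a * L ^+ 2 - 1 <= a * e * (2 * s0 + 1).
  have : L ^+ 2 <= (s0 + e) ^+ 2 by nra.
  rewrite -(ler_pM2l a0) => h1.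
  have h2 : a * (e * e) <= a * e by rewrite ler_pM2l //; nra.
  lra.
have hB : e * (M * a * (2 * s0 + 1)) < 4 * s0.
  have h : B * e < 1 by rewrite -Ne ltr_pM2r.
  have -> : e * (M * a * (2 * s0 + 1)) = (B * e) * (4 * s0).
    by rewrite /B; field; rewrite gt_eqF.
  nra.
rewrite ltr_pdivlMr; last lra.
have [M0|M0] := lerP M 0; first nra.
nra.
Qed.

Lemma choose_pow (R : realType) (r : {poly R}) (c : R) (sgn : bool) (e : nat) :
  r != 0 -> 0 < c -> (0 < e)%N ->
  exists q : rat, ~~ root r (ratr (q ^+ e)) /\ 0 < (ratr q : R) /\
     (if sgn then c < (ratr q : R) ^+ 2 else (ratr q : R) ^+ 2 < c).
Proof.
move=> nzr c0 e0.
case: sgn.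
- pose N := Num.Def.archi_bound c.
  have cN : c < N%:R by apply: archi_boundP; lra.
  pose f := fun n : nat => (((n + N).+1)%:R : rat) ^+ e.
  have fi : injective f.
    move=> m n /eqP; rewrite /f eqrXn2 ?ler0n // => /eqP /natq_inj; lia.
  have [n [_ nr]] := avoid 0 nzr fi.
  exists ((n + N).+1)%:R; split => //; rewrite ratr_nat; split; first by rewrite ltr0Sn.
  have h1 : (N%:R : R) <= ((n + N).+1)%:R by rewrite ler_nat; lia.
  have h2 : 1 <= (((n + N).+1)%:R : R) by rewrite ler1n.
  nra.
- pose N := Num.Def.archi_bound c^-1.
  have cN : c^-1 < N%:R by apply: archi_boundP; rewrite invr_ge0; lra.
  pose f := fun n : nat => (((n + N).+1)%:R : rat)^-1 ^+ e.
  have fi : injective f.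
    move=> m n /eqP; rewrite /f eqrXn2 ?invr_ge0 ?ler0n // => /eqP /invr_inj /natq_inj.
    lia.
  have [n [_ nr]] := avoid 0 nzr fi.
  exists ((n + N).+1)%:R^-1; split => //; rewrite fmorphV /=.
  have -> : ratr ((n + N).+1)%:R = ((n + N).+1)%:R :> R by rewrite ratr_nat.
  set m := ((n + N).+1)%:R.
  have h1 : (N%:R : R) <= m by rewrite ler_nat; lia.
  have m1 : 1 <= m by rewrite ler1n.
  split; first by rewrite invr_gt0; lra.
  have hm : m^-1 < c.
    rewrite invf_plt; [lra | rewrite posrE; lra | by rewrite posrE].
  have : m^-1 <= 1 by rewrite invf_le1; lra.
  have : 0 < m^-1 by rewrite invr_gt0; lra.
  move=> h3 h4; rewrite expr2.
  have h5 : m^-1 * m^-1 <= m^-1 * 1 by rewrite ler_pM2l.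
  rewrite mulr1 in h5; exact: (le_lt_trans h5 hm).
Qed.

Ltac kcl HK := repeat (first [ assumption | apply: (sfq HK) | apply: (sfn HK) | apply: (sf1 HK)
  | apply: (sfD HK) | apply: (sfB HK) | apply: (sfM HK) | apply: (sfdiv HK)
  | apply: (sfX HK) | apply: (sfN HK) | apply: (sfV HK)]).

Lemma step_kappa (R : realType) (K : set R) th : real_number_field K -> K th ->
  exists k, K k /\ k != 0 /\ Qadj (k ^+ 2) th.
Proof.
move=> HR Kth; have algK := alg_rnf HR; have HK := HR.1.
have [px [nzp px0]] := algK _ (sfX HK 2 Kth).
have [py [nzq qy0]] := algK _ Kth.
have [r nzr H] := PETQ nzp px0 nzq qy0.
have nzr' : r * ('X - (2 * th)%:P) != 0 by rewrite mulf_neq0 // polyXsubC_eq0.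
have [m [_ nr]] := avoid 0 nzr' natq_inj.
rewrite rootM negb_or root_XsubC in nr; case/andP: nr => nr1 nr2.
have [_ Hz] := H _ nr1.
exists (th - ratr (m%:R : rat) / 2); split; first by kcl HK.
split.
  apply: contra nr2 => /eqP h; apply/eqP; lra.
apply: Qadj_trans _ Hz.
have -> : ratr (m%:R : rat) * th - th ^+ 2 =
   (ratr (m%:R : rat)) ^+ 2 / 4 - (th - ratr (m%:R : rat) / 2) ^+ 2 by field.
have HQ := Qadj_sf ((th - ratr (m%:R : rat) / 2) ^+ 2).
apply: (sfB HQ); last exact: Qadj_self.
kcl HQ.
Qed.

Theorem theorem4p1 (R : realType) (K : set R) (a b : R) :
  real_number_field K -> K a -> K b -> 0 < a -> b != 0 ->
  exists x y z u v w : R,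
    [/\ K x, K y, K z & K u] /\ K v /\ K w /\
    [/\ x ^+ 2 - a * y ^+ 2 + a * u ^+ 2 - b * v ^+ 2 + a * b * w ^+ 2 = 0,
        z ^+ 2 - 4 = a * u ^+ 2,
        Qadj (y / u) = K &
        Qadj (y ^+ 2 / u ^+ 2) = K] /\
    [/\ u != 0,
        2 < x + y * z / (2 * u),
        1 < y / u,
        2 < z &
        4 < a * b * w ^+ 2 - b * v ^+ 2].
Proof.
move=> HR Ka Kb a0 b0.
have HK := HR.1; have algK := alg_rnf HR.
have [th [Kth Hth]] := prim HR.
have [k [Kk [k0 Hk]]] := step_kappa HR Kth.
pose Z := a * b * k ^+ 2.
have KZ : K Z by rewrite /Z; kcl HK.
have [pa [nzpa pa0]] := algK _ Ka.
have [pz [nzpz pz0]] := algK _ KZ.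
have [r2 nzr2 H2] := PETQ nzpa pa0 nzpz pz0.
have [q2 [nr2 [q2p _]]] := choose_pow true nzr2 ltr01 (isT : (0 < 2)%N).
have [HWa HWZ] := H2 _ nr2.
rewrite rmorphXn /= in HWa HWZ.
set t2 := (ratr q2 : R) in HWa HWZ q2p.
have Kt2 : K t2 by apply: sfq.
pose W := t2 ^+ 2 * Z - a.
have KW : K W by rewrite /W; kcl HK.
have [pw [nzpw pw0]] := algK _ (sfN HK KW).
have [pb [nzpb pb0]] := algK _ (sfN HK Kb).
have [r1 nzr1 H1] := PETQ nzpw pw0 nzpb pb0.
have k2p : 0 < k ^+ 2 by rewrite exprn_even_gt0.
have c1p : 0 < a * t2 ^+ 2 * k ^+ 2.
  by apply: mulr_gt0; [apply: mulr_gt0; [exact: a0 | exact: exprn_gt0] | exact: k2p].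
have [q1 [nr1 [q1p hq1]]] := choose_pow (0 < b) nzr1 c1p (isT : (0 < 2)%N).
have [HnW Hnb] := H1 _ nr1.
rewrite rmorphXn /= in HnW Hnb.
set t1 := (ratr q1 : R) in HnW Hnb q1p hq1.
have Kt1 : K t1 by apply: sfq.
pose P := b * (t1 ^+ 2 - a * t2 ^+ 2 * k ^+ 2).
have hP : 0 < P.
  rewrite /P; case: ltrP hq1 => hb hq.
    by apply: mulr_gt0 => //; lra.
  have hb' : b < 0 by rewrite lt_neqAle b0.
  nra.
pose n0 := t1 ^+ 2 * (- b) - (- W).
have n0E : n0 = - a - P by rewrite /n0 /W /Z /P; ring.
have n0neg : n0 < 0 by rewrite n0E; lra.
have Kn0 : K n0 by rewrite /n0; kcl HK.
have [pn [nzpn pn0]] := algK _ Kn0.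
have [pi [nzpi pi0]] := algK _ (sfN HK (sfV HK Kn0)).
have [r0p nzr0 H0] := PETQ nzpi pi0 nzpn pn0.
have cnp : 0 < (- n0)^-1 by rewrite invr_gt0; lra.
have [q [nr0 [qp hq]]] := choose_pow false nzr0 cnp (isT : (0 < 4)%N).
have [_ Hzz] := H0 _ nr0.
rewrite rmorphXn /= in Hzz.
set t := (ratr q : R) in Hzz qp hq.
have Kt : K t by apply: sfq.
pose v := t ^+ 2 * n0.
have hv1 : -1 < v.
  have : t ^+ 2 * (- n0) < (- n0)^-1 * (- n0) by rewrite ltr_pM2r //; lra.
  rewrite mulVf; last by rewrite gt_eqF //; lra.
  rewrite /v; lra.
have t2p : 0 < t ^+ 2 by exact: exprn_gt0.
have hv2 : v < 0 by rewrite /v; nra.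
pose r0 := (1 - v) / (1 + v).
have hv0 : v != 0 by rewrite lt_eqF.
have hv1' : 1 + v != 0 by rewrite gt_eqF //; lra.
have n00 : n0 != 0 by rewrite lt_eqF.
have t0 : t != 0 by rewrite gt_eqF.
have HF := Qadj_sf (r0 ^+ 2).
have Fr : Qadj (r0 ^+ 2) (r0 ^+ 2) := @Qadj_self R _.
have F1 : Qadj (r0 ^+ 2) (t ^+ 4 * n0 - - n0^-1).
  have -> : t ^+ 4 * n0 - - n0^-1 = t ^+ 2 * (4 / (1 - r0 ^+ 2) - 2).
    rewrite /r0 /v; field.
    rewrite -/t -/v hv1' n00 andbT /=.
    have -> : (1 + v) ^+ 2 - (1 - v) ^+ 2 = 4 * v by ring.
    by rewrite mulf_neq0 // pnatr_eq0.
  kcl HF.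
have Fn0 := Qadj_trans F1 Hzz.
have FmW := Qadj_trans Fn0 HnW.
have Fmb := Qadj_trans Fn0 Hnb.
have FW : Qadj (r0 ^+ 2) W by rewrite -(opprK W); apply: (sfN HF).
have Fb : Qadj (r0 ^+ 2) b by rewrite -(opprK b); apply: (sfN HF).
have Fa := Qadj_trans FW HWa.
have FZ := Qadj_trans FW HWZ.
have Fk2 : Qadj (r0 ^+ 2) (k ^+ 2).
  have -> : k ^+ 2 = Z / (a * b) by rewrite /Z; field; rewrite b0 gt_eqF.
  kcl HF.
have Fth := Qadj_trans Fk2 Hk.
have FK : forall w, K w -> Qadj (r0 ^+ 2) w := fun w hw => Qadj_trans Fth (Hth w hw).
have Kv : K v by rewrite /v; kcl HK.
have Kr0 : K r0 by rewrite /r0; kcl HK.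
pose g1 := 2 * t / (1 + v).
pose g2 := 2 * t * t1 / (1 + v).
pose g3 := 2 * t * t2 * k / (1 + v).
have Nr : r0 ^+ 2 - a * g1 ^+ 2 - b * g2 ^+ 2 + a * b * g3 ^+ 2 = 1.
  have vE : v = t ^+ 2 * (- a - b * (t1 ^+ 2 - a * t2 ^+ 2 * k ^+ 2)) by rewrite /v n0E.
  rewrite /r0 /g1 /g2 /g3; move: hv1'; rewrite vE => hv; field.
  by rewrite hv.
pose M := 1 + (2 * a * t)^-1 + (a * t ^+ 2 * P)^-1.
have [l [hl1 hl2]] := choose_lambda M a0.
set L := (ratr l : R) in hl1 hl2.
have KL : K L by apply: sfq.
pose u := 4 * L / (a * L ^+ 2 - 1).
pose z := 2 * (a * L ^+ 2 + 1) / (a * L ^+ 2 - 1).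
have hM : M < u by [].
have Mp1 : 1 < M.
  rewrite /M; have : 0 < (2 * a * t)^-1 by rewrite invr_gt0; nra.
  have : 0 < (a * t ^+ 2 * P)^-1 by rewrite invr_gt0; apply: mulr_gt0 => //; apply: mulr_gt0.
  lra.
have u0 : 0 < u by lra.
have D0 : a * L ^+ 2 - 1 != 0 by rewrite gt_eqF //; lra.
have Ku : K u by rewrite /u; kcl HK.
have Kz : K z by rewrite /z; kcl HK.
have Kg1 : K g1 by rewrite /g1; kcl HK.
have Kg2 : K g2 by rewrite /g2; kcl HK.
have Kg3 : K g3 by rewrite /g3; kcl HK.
have un0 : u != 0 by rewrite gt_eqF.
exists (a * u * g1), (u * r0), z, u, (a * u * g3), (u * g2).
split; first by split; kcl HK.
split; first by kcl HK.
split; first by kcl HK.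
split.
  split.
  - have -> : (a * u * g1) ^+ 2 - a * (u * r0) ^+ 2 + a * u ^+ 2 - b * (a * u * g3) ^+ 2
       + a * b * (u * g2) ^+ 2 =
       - (a * u ^+ 2) * ((r0 ^+ 2 - a * g1 ^+ 2 - b * g2 ^+ 2 + a * b * g3 ^+ 2) - 1) by ring.
    by rewrite Nr subrr mulr0.
  - by rewrite /z /u; field.
  - have -> : u * r0 / u = r0 by field.
    apply/seteqP; split => w hw; first exact: (Qadj_min HK Kr0 hw).
    apply: Qadj_trans (FK w hw).
    exact: (sfX (Qadj_sf r0) 2 (@Qadj_self R r0)).
  - have -> : (u * r0) ^+ 2 / u ^+ 2 = r0 ^+ 2 by field.
    apply/seteqP; split => w hw; first exact: (Qadj_min HK (sfX HK 2 Kr0) hw).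
    exact: FK.
have hv3 : 0 < 1 + v by lra.
have hr0 : 1 < r0 by rewrite /r0 ltr_pdivlMr //; lra.
have hD : 0 < a * L ^+ 2 - 1 by lra.
have hz : 2 < z by rewrite /z ltr_pdivlMr //; lra.
have at0 : 0 < 2 * a * t by apply: mulr_gt0 => //; apply: mulr_gt0.
have c0 : 0 < a * t ^+ 2 * P by apply: mulr_gt0 => //; apply: mulr_gt0.
have hi1 : 0 < (2 * a * t)^-1 by rewrite invr_gt0.
have hi2 : 0 < (a * t ^+ 2 * P)^-1 by rewrite invr_gt0.
have hu1 : 1 < u by rewrite /M in hM; lra.
have hu2 : (2 * a * t)^-1 < u by rewrite /M in hM; lra.
have hu3 : (a * t ^+ 2 * P)^-1 < u by rewrite /M in hM; lra.
split => //.
- have hg1 : 2 * t <= g1 by rewrite /g1 ler_pdivlMr //; nra.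
  have h1 : 1 < (2 * a * t) * u.
    have h := hu2; rewrite -(ltr_pM2l at0) mulfV ?gt_eqF // in h.
  have -> : u * r0 * z / (2 * u) = r0 * z / 2 by field.
  have h2 : 1 < a * u * g1.
    have : a * u * (2 * t) <= a * u * g1 by rewrite ler_pM2l //; apply: mulr_gt0.
    have -> : a * u * (2 * t) = 2 * a * t * u by ring.
    lra.
  have : 2 < r0 * z by nra.
  lra.
- by have -> : u * r0 / u = r0 by field.
- have -> : a * b * (u * g2) ^+ 2 - b * (a * u * g3) ^+ 2
     = 4 * ((a * t ^+ 2 * P) * u ^+ 2) / (1 + v) ^+ 2.
    by rewrite /g2 /g3 /P; field.
  have h1 : 1 < (a * t ^+ 2 * P) * u.
    have h := hu3; rewrite -(ltr_pM2l c0) mulfV ?gt_eqF // in h.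
  have h2 : 1 < (a * t ^+ 2 * P) * u ^+ 2.
    have : (a * t ^+ 2 * P) * u <= (a * t ^+ 2 * P) * u ^+ 2.
      by rewrite ler_pM2l // expr2 ler_peMr //; lra.
    lra.
  have hv4 : (1 + v) ^+ 2 <= 1 by nra.
  rewrite ltr_pdivlMr; last exact: exprn_gt0.
  nra.
Qed.
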